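(* Let $p$ be a prime, $q=p^r$, $\mathscr{C}\subseteq\mathbb{F}_q^n$ a linear code of dimension $k$ and $\mathscr{D}\subseteq\mathbb{F}_{q^k}^m$ a linear code of dimension $s$ with $0<s<m$ such that for every $1\le i\le m$ some codeword of $\mathscr{D}$ has $i$-th coordinate equal to $1$. Let $H$ and $H'$ be $\mathrm{BH}(q^k,p)$ matrices with rows indexed by $\mathbb{F}_{q^k}$ and columns indexed by $\mathscr{C}$. If $Q_H(\mathscr{C},\mathscr{D})=Q_{H'}(\mathscr{C},\mathscr{D})$, then $H$ and $H'$ are row-equivalent. Conversely, if $\mathscr{D}=\{(\lambda,\ldots,\lambda):\lambda\in\mathbb{F}_{q^k}\}\subseteq\mathbb{F}_{q^k}^m$ and $H,H'$ are row-equivalent, then $Q_H(\mathscr{C},\mathscr{D})=Q_{H'}(\mathscr{C},\mathscr{D})$.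
   Context: $\zeta=e^{2\pi i/p}$. A $\mathrm{BH}(q^k,p)$ matrix is a $q^k\times q^k$ matrix with entries $p$-th roots of unity with $HH^\dagger=q^kI$. Such a matrix with rows indexed by $\mathbb{F}_{q^k}$ and columns by $\mathscr{C}$ can be written $H=[\zeta^{f_\lambda(\mathbf{c})}]_{\lambda\in\mathbb{F}_{q^k},\mathbf{c}\in\mathscr{C}}$ for functions $f_\lambda:\mathscr{C}\to\mathbb{F}_p$. Set $\phi_\lambda=q^{-k/2}\sum_{\mathbf{c}\in\mathscr{C}}\zeta^{f_\lambda(\mathbf{c})}|\mathbf{c}\rangle\in(\mathbb{C}^q)^{\otimes n}$ (where $(\mathbb{C}^q)^{\otimes n}$ has orthonormal basis $|\mathbf{x}\rangle$, $\mathbf{x}\in\mathbb{F}_q^n$), $\Phi_\Lambda=\phi_{\lambda_1}\otimes\cdots\otimes\phi_{\lambda_m}$ for $\Lambda=(\lambda_1,\ldots,\lambda_m)$, and $Q_H(\mathscr{C},\mathscr{D})=\operatorname{span}\{\Phi_\Lambda:\Lambda\in\mathscr{D}\}$. Two such matrices are row-equivalent if one is obtained from the other by permuting rows and multiplying rows by $p$-th roots of unity. *)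

(* Defs.v *)
From HB Require Import structures.
From mathcomp Require Import all_boot all_order all_algebra all_fingroup all_field.
Set Implicit Arguments. Unset Strict Implicit. Unset Printing Implicit Defensive.
Import Order.TTheory GRing.Theory Num.Theory.
Local Open Scope ring_scope.

(* A vector of (C^q)^{(x) n} is a function 'rV[F]_n -> algC (coordinates in the
   basis |x>), and a vector of ((C^q)^{(x) n})^{(x) m} is a function on
   'M[F]_(m,n) (row i = the i-th tensor factor's basis label). *)

Section BH.
Variables (F K : finFieldType) (n m : nat) (C : {vspace 'rV[F]_n}).

Definition is_BH (N p : nat) (H : K -> 'rV[F]_n -> algC) : Prop :=
  (forall l c, c \in C -> H l c ^+ p = 1) /\
  (forall l l', \sum_(c : 'rV[F]_n | c \in C) H l c * (H l' c)^* =
                (N * (l == l'))%:R).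

Definition row_equiv (p : nat) (H H' : K -> 'rV[F]_n -> algC) : Prop :=
  exists (sigma : {perm K}) (u : K -> algC),
    (forall l, u l ^+ p = 1) /\
    (forall l c, c \in C -> H' l c = u l * H (sigma l) c).

Definition phi (q k : nat) (H : K -> 'rV[F]_n -> algC) (l : K)
  : 'rV[F]_n -> algC :=
  fun x => if x \in C then (sqrtC (q ^ k)%:R)^-1 * H l x else 0.

Definition Phi (q k : nat) (H : K -> 'rV[F]_n -> algC) (L : 'rV[K]_m)
  : {ffun 'M[F]_(m, n) -> algC^o} :=
  [ffun X : 'M[F]_(m, n) => \prod_(i < m) phi q k H (L 0 i) (row i X)].

Definition QH (q k : nat) (H : K -> 'rV[F]_n -> algC) (D : {vspace 'rV[K]_m})
  : {vspace {ffun 'M[F]_(m, n) -> algC^o}} :=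
  <<[seq Phi q k H L | L <- [seq L <- enum [set: 'rV[K]_m] | L \in D]]>>%VS.

End BH.

(* Main.v *)
Require Import Defs.
From HB Require Import structures.
From mathcomp Require Import all_boot all_order all_algebra all_fingroup all_field.
Import Order.TTheory GRing.Theory Num.Theory.
Local Open Scope ring_scope.
Set Implicit Arguments. Unset Strict Implicit. Unset Printing Implicit Defensive.

Definition ip (T : finType) (f g : T -> algC) := \sum_x f x * (g x)^*.

Lemma eq_ip (T : finType) (f f' g g' : T -> algC) :
  f =1 f' -> g =1 g' -> ip f g = ip f' g'.
Proof. by move=> e1 e2; apply: eq_bigr => x _; rewrite e1 e2. Qed.

Lemma ipZ (T : finType) (f g : T -> algC) c d :
  ip (fun x => c * f x) (fun x => d * g x) = c * d^* * ip f g.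
Proof.
rewrite /ip mulr_sumr; apply: eq_bigr => x _.
by rewrite rmorphM /= mulrACA.
Qed.

Lemma sum_rows (F : finFieldType) (m n : nat) (G : 'I_m -> 'rV[F]_n -> algC) :
  \sum_(X : 'M[F]_(m, n)) \prod_i G i (row i X) = \prod_i \sum_x G i x.
Proof.
rewrite bigA_distr_bigA /=.
rewrite (reindex (fun X : 'M[F]_(m, n) => [ffun i => row i X])) /=.
  by apply: eq_bigr => X _; apply: eq_bigr => i _; rewrite ffunE.
exists (fun f : {ffun 'I_m -> 'rV[F]_n} => \matrix_(i, j) f i 0 j).
  by move=> X _; apply/matrixP => i j; rewrite !mxE ffunE mxE.
move=> f _; apply/ffunP => i; rewrite ffunE; apply/rowP => j.
by rewrite !mxE.
Qed.

Section Gen.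
Variables (F K : finFieldType) (n : nat) (C : {vspace 'rV[F]_n}) (q k p : nat).
Hypothesis qkK : (q ^ k)%N = #|K|.

Let s : algC := sqrtC (#|K|%:R).

Lemma s_facts : [/\ s != 0, (s^-1)^* = s^-1 & s * s = #|K|%:R].
Proof.
have N0 : (0 < #|K|)%N by apply/card_gt0P; exists 0.
split.
- by rewrite sqrtC_eq0 pnatr_eq0 -lt0n.
- by rewrite geC0_conj // invr_ge0 sqrtC_ge0 ler0n.
- by rewrite -expr2 sqrtCK.
Qed.

Lemma phiE (H : K -> _ -> algC) l x : phi C q k H l x = if x \in C then s^-1 * H l x else 0.
Proof. by rewrite /phi qkK. Qed.

Lemma ip_phi (H : K -> _ -> algC) : is_BH C (q ^ k) p H -> forall l l',
  ip (phi C q k H l) (phi C q k H l') = (l == l')%:R.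
Proof.
case=> _ hO l l'; have [s0 sc ss] := s_facts.
rewrite /ip (eq_bigr (fun x => if x \in C then s^-1 * s^-1 * (H l x * (H l' x)^*) else 0)); last first.
  move=> x _; rewrite !phiE; case: (x \in C); last by rewrite mul0r.
  by rewrite rmorphM /= sc mulrACA.
rewrite -big_mkcond /= -mulr_sumr hO qkK natrM mulrA.
rewrite -invfM ss mulVf ?mul1r //; by rewrite pnatr_eq0 -lt0n; apply/card_gt0P; exists 0.
Qed.

Hypothesis cardC : #|C| = #|K|.

Lemma complete (H : K -> _ -> algC) : is_BH C (q ^ k) p H -> forall x y, x \in C -> y \in C ->
  \sum_l phi C q k H l x * (phi C q k H l y)^* = (x == y)%:R.
Proof.
case=> _ hO x y xC yC; have [s0 sc ss] := s_facts.
set N := #|K|.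
have N0 : (N%:R : algC) != 0 by rewrite pnatr_eq0 -lt0n; apply/card_gt0P; exists 0.
set eK := enum K; set eC := enum C.
have szK : size eK = N by rewrite /eK /N cardT.
have szC : size eC = N by rewrite /eC /N -cardC cardE.
pose A : 'M[algC]_N := \matrix_(i, j) H (nth 0 eK i) (nth 0 eC j).
pose B : 'M[algC]_N := \matrix_(i, j) (A j i)^*.
have sumC (G : 'rV[F]_n -> algC) : \sum_(j < N) G (nth 0 eC j) = \sum_(c in C) G c.
  by rewrite -[RHS]big_enum [RHS](big_nth 0) -/eC szC big_mkord.
have sumK (G : K -> algC) : \sum_(j < N) G (nth 0 eK j) = \sum_l G l.
  have -> : \sum_l G l = \sum_(l <- eK) G l.
    by rewrite big_enum /=; apply: eq_bigl => l; rewrite inE.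
  by rewrite (big_nth 0) szK big_mkord.
have AB : A *m (N%:R^-1 *: B) = 1%:M.
  apply/matrixP => i i'; rewrite !mxE.
  rewrite (eq_bigr (fun j : 'I_N => N%:R^-1 * (H (nth 0 eK i) (nth 0 eC j) * (H (nth 0 eK i') (nth 0 eC j))^*))); last first.
    by move=> j _; rewrite !mxE mulrCA.
  rewrite -mulr_sumr (sumC (fun c => H (nth 0 eK i) c * (H (nth 0 eK i') c)^*)) hO.
  rewrite qkK -/N natrM mulKf //.
  rewrite nth_uniq ?szK ?enum_uniq //.
have xC' : x \in eC by rewrite mem_enum.
have yC' : y \in eC by rewrite mem_enum.
have jxP : (index x eC < N)%N by rewrite -szC index_mem.
have jyP : (index y eC < N)%N by rewrite -szC index_mem.
pose jx := Ordinal jxP; pose jy := Ordinal jyP.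
have ej : (jy == jx) = (x == y).
  apply/eqP/eqP => [/(congr1 val) /= h | exy]; last by apply: val_inj; rewrite /= exy.
  by rewrite -(nth_index 0 xC') -(nth_index 0 yC') h.
have E : \sum_(i < N) N%:R^-1 * (H eK`_i x * (H eK`_i y)^*) = (x == y)%:R.
  have := congr1 (fun M : 'M_N => M jy jx) (mulmx1C AB); rewrite !mxE -ej => <-.
  apply: eq_bigr => i _; rewrite !mxE /= (nth_index 0 xC') (nth_index 0 yC').
  by rewrite mulrCA [LHS]mulrC.
rewrite -E -(sumK (fun l => phi C q k H l x * (phi C q k H l y)^*)).
apply: eq_bigr => i _; rewrite !phiE xC yC rmorphM /= [s^-1^*]geC0_conj ?invr_ge0 ?sqrtC_ge0 ?ler0n //.
by rewrite mulrACA -invfM ss.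
Qed.

Lemma expand (H : K -> _ -> algC) : is_BH C (q ^ k) p H ->
  forall f : 'rV[F]_n -> algC, (forall x, x \notin C -> f x = 0) ->
  forall x, f x = \sum_mu ip f (phi C q k H mu) * phi C q k H mu x.
Proof.
move=> hB f fC x.
have -> : \sum_mu ip f (phi C q k H mu) * phi C q k H mu x =
    \sum_y f y * \sum_mu phi C q k H mu x * (phi C q k H mu y)^*.
  rewrite /ip; under eq_bigr do rewrite mulr_suml.
  rewrite exchange_big /=; apply: eq_bigr => y _; rewrite mulr_sumr.
  by apply: eq_bigr => mu _; rewrite mulrAC -mulrA.
case xC: (x \in C); last first.
  rewrite fC ?xC // big1 // => y _; rewrite big1 ?mulr0 // => mu _.
  by rewrite phiE xC mul0r.
rewrite (bigD1 x) //= (complete hB) // eqxx mulr1 big1 ?addr0 //.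
move=> y nyx; case yC: (y \in C); last by rewrite fC ?yC // mul0r.
by rewrite (complete hB) // eq_sym (negbTE nyx) mulr0.
Qed.

End Gen.

Lemma ip_Phi (F K : finFieldType) (n : nat) (C : {vspace 'rV[F]_n}) (q k m : nat)
  (H1 H2 : K -> 'rV[F]_n -> algC) (L M : 'rV[K]_m) :
  ip (fun X => Phi C q k H1 L X) (fun X => Phi C q k H2 M X) =
  \prod_i ip (phi C q k H1 (L 0 i)) (phi C q k H2 (M 0 i)).
Proof.
rewrite /ip -sum_rows; apply: eq_bigr => X _.
by rewrite !ffunE rmorph_prod -big_split.
Qed.


Lemma QH_sub (F K : finFieldType) (n : nat) (C : {vspace 'rV[F]_n}) (q k m : nat)
  (D : {vspace 'rV[K]_m}) (Ha Hb : K -> 'rV[F]_n -> algC) :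
  (forall d : 'rV[K]_m, d \in D <-> exists l : K, d = const_mx l) ->
  (forall l, exists l2 c, forall x, phi C q k Hb l x = c * phi C q k Ha l2 x) ->
  (QH C q k Hb D <= QH C q k Ha D)%VS.
Proof.
move=> hD hphi; apply/span_subvP => v /mapP [L]; rewrite mem_filter => /andP [LD _] ->.
have [l eL] := (hD L).1 LD.
have [l2 [c hc]] := hphi l.
have -> : Phi C q k Hb L = c ^+ m *: Phi C q k Ha (const_mx l2).
  apply/ffunP => X; rewrite !ffunE eL.
  rewrite (eq_bigr (fun i => c * phi C q k Ha l2 (row i X))) => [|i _]; last by rewrite !mxE hc.
  rewrite big_split /= prodr_const card_ord.
  rewrite (eq_bigr (fun i => phi C q k Ha l2 (row i X)) (P := xpredT) (F1 := fun i => phi C q k Ha (const_mx l2 0 i) (row i X))) //.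
  by move=> i _; rewrite mxE.
apply: memvZ; apply: memv_span; apply: map_f.
rewrite mem_filter mem_enum in_setT andbT; apply/hD; by exists l2.
Qed.

Lemma part1 (F K : finFieldType) (n : nat) (C : {vspace 'rV[F]_n}) (q k p m : nat)
  (H H' : K -> 'rV[F]_n -> algC) (D : {vspace 'rV[K]_m}) :
  (q ^ k)%N = #|K| -> #|C| = #|K| -> is_BH C (q ^ k) p H -> is_BH C (q ^ k) p H' ->
  (\dim D < m)%N -> (forall i : 'I_m, exists2 d : 'rV[K]_m, d \in D & d 0 i = 1) ->
  QH C q k H D = QH C q k H' D -> row_equiv C p H H'.
Proof.
move=> qkK cC hB hB' Dm hd hQ.
pose ph := phi C q k H; pose ph' := phi C q k H'.
pose a l mu := ip (ph' l) (ph mu).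
have orth : forall L M : 'rV[K]_m, L \in D -> M \notin D ->
    ip (fun X => Phi C q k H' L X) (fun X => Phi C q k H M X) = 0.
  move=> L M LD MD.
  have : Phi C q k H' L \in QH C q k H D.
    rewrite hQ; apply: memv_span; apply: map_f.
    by rewrite mem_filter mem_enum in_setT andbT.
  rewrite /QH; set S := [seq _ | _ <- _] => /(@coord_span _ _ _ (in_tuple S)) ->.
  rewrite /ip; under eq_bigr do rewrite sum_ffunE mulr_suml.
  rewrite exchange_big big1 // => i _.
  under eq_bigr do rewrite ffunE -mulrA.
  rewrite -mulr_sumr.
  have : (in_tuple S)`_i \in S by rewrite mem_nth // size_tuple.
  case/mapP => M'; rewrite mem_filter => /andP [M'D _] ->.
  have := ip_Phi C q k H H M' M; rewrite /ip => ->.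
  case: (pickP (fun j => M' 0 j != M 0 j)) => [j hj | none]; last first.
    suff eM : M' = M by rewrite -eM M'D in MD.
    by apply/rowP => j; apply/eqP; have := none j => /negbFE.
  rewrite (bigD1 j) //= -/(ip (phi C q k H (M' 0 j)) (phi C q k H (M 0 j))).
  by rewrite (ip_phi qkK hB) (negbTE hj) mul0r mulr0.
have inD : forall L M : 'rV[K]_m, L \in D -> (forall i, a (L 0 i) (M 0 i) != 0) -> M \in D.
  move=> L M LD hLM; apply/negPn/negP => MD.
  have := orth L M LD MD; rewrite ip_Phi => /eqP; apply/negP.
  by apply/prodf_neq0 => i _; exact: hLM i.
have supp l : forall x, x \notin C -> ph' l x = 0.
  by move=> x /negbTE xC; rewrite /ph' (phiE C qkK) xC.
have ex : forall l, exists mu, a l mu != 0.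
  move=> l; case: (pickP (fun mu => a l mu != 0)) => [mu h | none]; first by exists mu.
  have z : forall x, ph' l x = 0.
    move=> x; rewrite (expand qkK cC hB (supp l) x) big1 // => mu _.
    by move/negbFE/eqP: (none mu) => h; rewrite -/(a l mu) h mul0r.
  have := ip_phi qkK hB' l l; rewrite eqxx /ip big1 => [|x _]; last by rewrite (z x : phi C q k H' l x = 0) mul0r.
  by move/eqP; rewrite eq_sym oner_eq0.
pose g l := odflt 0 [pick mu | a l mu != 0].
have gP l : a l (g l) != 0.
  rewrite /g; case: pickP => [mu //|none].
  by have [mu h] := ex l; rewrite none in h.
have guniq : forall l mu, a l mu != 0 -> mu = g l.
  move=> l mu h; apply/eqP/negPn/negP => neq.
  have allD : forall i : 'I_m, delta_mx 0 i \in D.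
    move=> i; have [d dD d1] := hd i.
    pose L := l *: d.
    have LD : L \in D by rewrite memvZ.
    pose M (mu0 : K) : 'rV[K]_m := \row_j (if j == i then mu0 else g (L 0 j)).
    have MD mu0 : a l mu0 != 0 -> M mu0 \in D.
      move=> h0; apply: (inD L) => // j; rewrite !mxE; case: ifP => [/eqP -> | _]; last exact: gP.
      by rewrite d1 mulr1.
    have e : M mu - M (g l) = (mu - g l) *: delta_mx 0 i.
      apply/rowP => j; rewrite !mxE eqxx /=; case: eqP => _.
        by rewrite mulr1.
      by rewrite subrr mulr0.
    have : (mu - g l)^-1 *: (M mu - M (g l)) \in D by rewrite memvZ // memvB // MD.
    by rewrite e scalerA mulVf ?scale1r // subr_eq0.
  have : (fullv <= D)%VS.
    apply/subvP => v _; rewrite (matrix_sum_delta v) big_ord1.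
    by apply: memv_suml => j _; rewrite memvZ.
  move/dimvS; rewrite dimvf dim_matrix mul1r => hdim.
  by move: Dm; rewrite ltnNge hdim.
have key l x : ph' l x = a l (g l) * ph (g l) x.
  rewrite (expand qkK cC hB (supp l) x) (bigD1 (g l)) //= big1 ?addr0 // => mu nmu.
  case: (eqVneq (a l mu) 0) => [h0 | h]; first by rewrite -/(a l mu) h0 mul0r.
  by rewrite -(guniq _ _ h) eqxx in nmu.
have ginj : injective g.
  move=> l1 l2 e; apply/eqP; have h1 := gP l1; have h2 := gP l2; rewrite e in h1.
  have := ip_phi qkK hB' l1 l2; rewrite (eq_ip (key l1) (key l2)) ipZ e (ip_phi qkK hB) eqxx mulr1.
  by case: eqP => // _ /eqP; rewrite mulf_eq0 conjC_eq0 (negbTE h1) (negbTE h2).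
have sK : (sqrtC (#|K|%:R) : algC)^-1 != 0.
  by rewrite invr_eq0 sqrtC_eq0 pnatr_eq0 -lt0n; apply/card_gt0P; exists 0.
have hH l c : c \in C -> H' l c = a l (g l) * H (g l) c.
  move=> cC0; have := key l c; rewrite /ph' /ph !(phiE C qkK) cC0 => e0.
  by apply: (mulfI sK); rewrite e0 mulrCA.
exists (perm ginj), (fun l => a l (g l)); split.
  move=> l; have c0 : (0 : 'rV[F]_n) \in C := mem0v C.
  have := hB'.1 l 0 c0; rewrite (hH l 0 c0) exprMn (hB.1 _ _ c0) mulr1 => //.
by move=> l c cC0; rewrite permE hH.
Qed.

Theorem proposition2p4 (p r n k m : nat) (F K : finFieldType)
  (C : {vspace 'rV[F]_n}) (H H' : K -> 'rV[F]_n -> algC) :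
  prime p -> #|F| = (p ^ r)%N -> #|K| = ((p ^ r) ^ k)%N -> \dim C = k ->
  is_BH C ((p ^ r) ^ k) p H -> is_BH C ((p ^ r) ^ k) p H' ->
  (forall (s : nat) (D : {vspace 'rV[K]_m}),
      \dim D = s -> (0 < s < m)%N ->
      (forall i : 'I_m, exists2 d : 'rV[K]_m, d \in D & d 0 i = 1) ->
      QH C (p ^ r) k H D = QH C (p ^ r) k H' D ->
      row_equiv C p H H')
  /\
  (forall D : {vspace 'rV[K]_m},
      (forall d : 'rV[K]_m, d \in D <-> exists l : K, d = const_mx l) ->
      row_equiv C p H H' ->
      QH C (p ^ r) k H D = QH C (p ^ r) k H' D).
Proof.
move=> pp hF hK hC hB hB'; split.
  move=> s D hs /andP [_ sm] hd hQ.
  apply: (part1 _ _ hB hB' _ hd hQ); first by rewrite hK.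
    by rewrite card_vspace hF hC hK.
  by rewrite hs.
move=> D hD [sig [u [hu hH]]].
have u0 l : u l != 0.
  apply/eqP => e; have := hu l; rewrite e expr0n.
  have /negbTE -> : p != 0%N by rewrite -lt0n prime_gt0.
  by move/eqP; rewrite eq_sym oner_eq0.
have e1 l x : phi C (p ^ r) k H' l x = u l * phi C (p ^ r) k H (sig l) x.
  rewrite /phi; case xC: (x \in C); last by rewrite mulr0.
  by rewrite hH // mulrCA.
apply/eqP; rewrite eqEsubv; apply/andP; split.
  apply: QH_sub hD _ => l; exists ((sig^-1)%g l), (u ((sig^-1)%g l))^-1 => x.
  by rewrite e1 mulKf // permKV.
apply: QH_sub hD _ => l; exists (sig l), (u l); exact: e1.
Qed.
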